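(* Assume (H1), fix $\theta_0\in(0,2)$ and $x,y\in\mathbb{R}^d$, and let $\zeta$ and $(X_t,Y_t)_{t\in[0,T)}$ be as in the context. Then almost surely, for every $s_0\in[0,T)$, $$\int_0^{s_0}\frac{|X_t-Y_t|^2}{\zeta^4(t)}dt+\frac{|X_{s_0}-Y_{s_0}|^2}{\theta_0\,\zeta^3(s_0)}\le\frac{|x-y|^2}{\theta_0\,\zeta^3(0)}.$$
   Context: Fix $T>0$, $H\in(1/2,1)$; $B^H$ is a $d$-dimensional fractional Brownian motion with Hurst parameter $H$. SDE: $dX_t=b(t,X_t)dt+\sigma(t)dB^H_t$, $X_0=x$, with $b:[0,T]\times\mathbb{R}^d\to\mathbb{R}^d$, $\sigma:[0,T]\to$ invertible $d\times d$ matrices. Assumption (H1): (i) there is $K>0$ with $|b(t,x)-b(t,y)|\le K|x-y|$ for all $t,x,y$, and $t\mapsto b(t,x)$ is Lipschitz for each $x$; (ii) $\sigma$ is bounded and $|\sigma^{-1}(t)-\sigma^{-1}(s)|\le\bar K|t-s|^{\alpha_0}$ for some $\bar K\ge0$, $\alpha_0\in(H-1/2,1]$. For $\theta_0\in(0,2)$ set $\zeta(t)=\frac{2-\theta_0}{2K}\big(1-e^{\frac23K(t-T)}\big)$, $t\in[0,T]$. $X$ solves the SDE with $X_0=x$, and $Y$ is the solution on $[0,T)$ of $dY_t=b(t,Y_t)dt+\sigma(t)dB^H_t+\frac{X_t-Y_t}{\zeta(t)}dt$, $Y_0=y$ (driven by the same $B^H$). *)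

(* Defs.v *)
From Stdlib Require Import Reals Lra List.
Open Scope R_scope.

(* Vectors of R^d are represented as functions nat -> R; only the
   coordinates i < d are meaningful. Matrices as nat -> nat -> R. *)
Definition vec := nat -> R.
Definition mat := nat -> nat -> R.

Definition vsub (u v : vec) : vec := fun i => u i - v i.

Definition sqnorm (d : nat) (v : vec) : R :=
  fold_right Rplus 0 (map (fun i => (v i) ^ 2) (seq 0 d)).

Definition norm (d : nat) (v : vec) : R := sqrt (sqnorm d v).

Definition frob (d : nat) (A : mat) : R :=
  sqrt (fold_right Rplus 0
          (map (fun i => fold_right Rplus 0
                   (map (fun j => (A i j) ^ 2) (seq 0 d))) (seq 0 d))).

Definition msub (A B : mat) : mat := fun i j => A i j - B i j.

Definition mmul (d : nat) (A B : mat) : mat :=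
  fun i j => fold_right Rplus 0 (map (fun k => A i k * B k j) (seq 0 d)).

Definition is_inverse (d : nat) (A B : mat) : Prop :=
  forall i j, (i < d)%nat -> (j < d)%nat ->
    mmul d A B i j = (if Nat.eqb i j then 1 else 0) /\
    mmul d B A i j = (if Nat.eqb i j then 1 else 0).

Definition zeta (K T theta0 t : R) : R :=
  (2 - theta0) / (2 * K) * (1 - exp (2 / 3 * K * (t - T))).

(* Main.v *)
Require Import Defs.
From Stdlib Require Import Reals List Lra Lia.
Open Scope R_scope.
From Coquelicot Require Coquelicot.
Module Aux.
Import Coquelicot.Coquelicot.

Definition sumL (l : list nat) (f : nat -> R) : R := fold_right Rplus 0 (map f l).

Lemma sumL_le l f g : (forall i, In i l -> f i <= g i) -> sumL l f <= sumL l g.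
Proof. unfold sumL in *; induction l as [|a l IH]; simpl; intros H. lra.
  apply Rplus_le_compat; [apply H; auto| apply IH; auto]. Qed.

Lemma sumL_plus l f g : sumL l (fun i => f i + g i) = sumL l f + sumL l g.
Proof. unfold sumL in *; induction l as [|a l IH]; simpl. lra. unfold sumL in IH; rewrite IH; lra. Qed.

Lemma sumL_scal l c f : sumL l (fun i => c * f i) = c * sumL l f.
Proof. unfold sumL in *; induction l as [|a l IH]; simpl. lra. unfold sumL in IH; rewrite IH; lra. Qed.

Lemma sumL_ext l f g : (forall i, In i l -> f i = g i) -> sumL l f = sumL l g.
Proof. unfold sumL in *; induction l as [|a l IH]; simpl; intros H. lra.
  rewrite H by auto. unfold sumL in IH; rewrite IH; auto. Qed.

Lemma sumL_ge0 l f : (forall i, In i l -> 0 <= f i) -> 0 <= sumL l f.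
Proof. unfold sumL; induction l as [|a l IH]; simpl; intros H. lra.
  assert (0 <= f a) by auto. assert (0 <= fold_right Rplus 0 (map f l)) by auto. lra. Qed.

Definition cw (D : R -> Prop) (f : R -> R) (t : R) := limit1_in f D (f t) t.

Lemma cw_get D f t : cw D f t -> forall eta, 0 < eta -> exists del, 0 < del /\
  forall r, D r -> Rabs (r - t) < del -> Rabs (f r - f t) < eta.
Proof. intros H eta He. destruct (H eta He) as [a [Ha Hb]]. exists a; split; auto.
  intros r Dr Hr. apply (Hb r); split; auto. Qed.

Lemma cw_mk D f t : (forall eta, 0 < eta -> exists del, 0 < del /\
  forall r, D r -> Rabs (r - t) < del -> Rabs (f r - f t) < eta) -> cw D f t.
Proof. intros H eta He. destruct (H eta He) as [a [Ha Hb]]. exists a; split; auto.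
  intros r [Dr Hr]. apply Hb; auto. Qed.

Lemma cw_pt D f t : continuity_pt f t -> cw D f t.
Proof. intros H. apply cw_mk. intros eta He. destruct (H eta He) as [a [Ha Hb]].
  exists a; split; auto. intros r Dr Hr.
  destruct (Req_dec t r) as [<-|Hn]. rewrite Rminus_eq_0, Rabs_R0; auto.
  apply (Hb r). split. split; [exact I| auto]. exact Hr. Qed.

Lemma cw_plus D f g t : cw D f t -> cw D g t -> cw D (fun x => f x + g x) t.
Proof. intros; apply limit_plus; auto. Qed.
Lemma cw_minus D f g t : cw D f t -> cw D g t -> cw D (fun x => f x - g x) t.
Proof. intros; apply limit_minus; auto. Qed.
Lemma cw_mult D f g t : cw D f t -> cw D g t -> cw D (fun x => f x * g x) t.
Proof. intros; apply limit_mul; auto. Qed.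
Lemma cw_inv D f t : cw D f t -> f t <> 0 -> cw D (fun x => / f x) t.
Proof. intros; apply limit_inv; auto. Qed.
Lemma cw_const D c t : cw D (fun _ => c) t.
Proof. apply cw_mk. intros eta He; exists 1; split; [lra|]. intros. rewrite Rminus_eq_0, Rabs_R0; auto. Qed.
Lemma cw_ext D f g t : (forall x, f x = g x) -> cw D f t -> cw D g t.
Proof. intros E H. apply cw_mk. intros eta He. destruct (cw_get _ _ _ H eta He) as [a [Ha Hb]].
  exists a; split; auto. intros. rewrite <- !E; auto. Qed.
Lemma cw_sumL D l (F : nat -> R -> R) t : (forall i, In i l -> cw D (F i) t) ->
  cw D (fun x => sumL l (fun i => F i x)) t.
Proof. unfold sumL in *; induction l as [|a l IH]; simpl; intros H.
  apply cw_const. apply (cw_plus D (F a) (fun x => sumL l (fun i => F i x))); auto. Qed.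


Lemma ex_sub (f : R -> R) a b r s : ex_RInt f a b -> a <= r <= b -> a <= s <= b -> ex_RInt f r s.
Proof. intros H Hr Hs.
  assert (K: forall r s, a <= r <= s -> s <= b -> ex_RInt f r s).
  { intros r0 s0 H1 H2. apply (ex_RInt_Chasles_2 f a r0 s0). lra.
    apply (ex_RInt_Chasles_1 f a s0 b). lra. exact H. }
  destruct (Rle_dec r s). apply K; lra. apply ex_RInt_swap. apply K; lra. Qed.

Lemma RInt_diff (f : R -> R) a b r s : ex_RInt f a b -> a <= r <= b -> a <= s <= b ->
  RInt f a r - RInt f a s = RInt f s r.
Proof. intros H Hr Hs. rewrite <- (RInt_Chasles f a s r).
  change (plus (RInt f a s) (RInt f s r)) with (RInt f a s + RInt f s r). ring.
  apply (ex_sub f a b); auto; lra. apply (ex_sub f a b); auto; lra. Qed.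

Lemma RInt_abs_bound (f : R -> R) r s M : ex_RInt f r s ->
  (forall x, Rmin r s <= x <= Rmax r s -> Rabs (f x) <= M) ->
  Rabs (RInt f r s) <= Rabs (s - r) * M.
Proof. intros H HM. apply (norm_RInt_le_const_abs f r s (RInt f r s) M).
  intros x Hx. apply HM; auto. exact (RInt_correct f r s H). Qed.

Lemma prim_lip (f : R -> R) a b : ex_RInt f a b -> a <= b -> exists M, 0 < M /\
  forall r s, a <= r <= b -> a <= s <= b -> Rabs (RInt f a r - RInt f a s) <= M * Rabs (r - s).
Proof. intros H Hab. destruct (ex_RInt_ub f a b H) as [M0 HM0].
  exists (Rabs M0 + 1). split. pose proof (Rabs_pos M0); lra.
  intros r s Hr Hs. rewrite (RInt_diff f a b r s) by auto.
  rewrite Rmult_comm. apply RInt_abs_bound.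
  apply (ex_sub f a b); auto; lra. intros x Hx.
  assert (Rabs (f x) <= M0). { apply (HM0 x). rewrite Rmin_left, Rmax_right by auto.
    split. apply Rle_trans with (Rmin s r). apply Rmin_glb; lra. lra.
    apply Rle_trans with (Rmax s r). lra. apply Rmax_lub; lra. }
  pose proof (Rle_abs M0); lra. Qed.

Lemma RInt_sumL l (F : nat -> R -> R) a b : (forall i, In i l -> ex_RInt (F i) a b) ->
  ex_RInt (fun x => sumL l (fun i => F i x)) a b /\
  RInt (fun x => sumL l (fun i => F i x)) a b = sumL l (fun i => RInt (F i) a b).
Proof. induction l as [|c l IH]; intros H.
  - unfold sumL; simpl. split. apply ex_RInt_const. rewrite RInt_const.
    change (scal (b - a) 0) with ((b - a) * 0). ring.
  - destruct IH as [IH1 IH2]. intros; apply H; simpl; auto.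
    assert (Hc : ex_RInt (F c) a b) by (apply H; simpl; auto).
    split.
    + apply (ex_RInt_plus (F c) (fun x => sumL l (fun i => F i x))); auto.
    + change (RInt (fun x => plus (F c x) (sumL l (fun i => F i x))) a b =
        RInt (F c) a b + sumL l (fun i => RInt (F i) a b)).
      rewrite (RInt_plus (F c) (fun x => sumL l (fun i => F i x))) by auto. rewrite IH2. reflexivity. Qed.


Lemma sup_mono_eps (G : R -> R) a b eps : a <= b -> 0 < eps ->
  (forall c, a <= c <= b -> cw (fun r => a <= r <= b) G c) ->
  (forall t, a <= t < b -> forall e, 0 < e -> exists del, 0 < del /\
      forall t', t < t' < t + del -> t' <= b -> G t' <= G t + e * (t' - t)) ->
  G b <= G a + eps * (b - a).
Proof. intros Hab He Hc Hl.
  set (S := fun r => a <= r <= b /\ G r <= G a + eps * (r - a)).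
  assert (Hb : bound S). { exists b. intros r [Hr _]. lra. }
  assert (Hne : exists x, S x). { exists a. split. lra. lra. }
  destruct (completeness S Hb Hne) as [c [Hub Hlub]].
  assert (Hac : a <= c). { apply Hub. split; lra. }
  assert (Hcb : c <= b). { apply Hlub. intros r [Hr _]. lra. }
  assert (HSc : G c <= G a + eps * (c - a)).
  { destruct (Rle_dec (G c) (G a + eps * (c - a))) as [h|h]; auto. exfalso.
    set (gap := G c - G a - eps * (c - a)).
    assert (Hg : 0 < gap) by (unfold gap; lra).
    destruct (cw_get _ _ _ (Hc c (conj Hac Hcb)) (gap/2)) as [d1 [Hd1 Hd1']]. lra.
    set (d := Rmin d1 (gap / (2 * eps))).
    assert (Hd : 0 < d). { unfold d. apply Rmin_glb_lt. lra. apply Rdiv_lt_0_compat; lra. }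
    assert (Hup : is_upper_bound S (c - d)).
    { intros r [Hr Gr]. destruct (Rle_dec r (c - d)) as [h2|h2]; auto. exfalso.
      assert (r <= c) by (apply Hub; split; auto).
      assert (Rabs (r - c) < d1).
      { rewrite Rabs_left1 by lra. assert (d <= d1) by apply Rmin_l. lra. }
      pose proof (Hd1' r Hr H0) as Hx.
      assert (Hx2 : G c - gap/2 < G r). { apply Rabs_def2 in Hx. lra. }
      assert (d <= gap / (2*eps)) by apply Rmin_r.
      assert (eps * (c - r) <= gap / 2).
      { apply Rle_trans with (eps * d). apply Rmult_le_compat_l; lra.
        apply Rle_trans with (eps * (gap / (2*eps))). apply Rmult_le_compat_l; lra.
        right. field. lra. }
      assert (eps * (c - a) - eps * (r - a) = eps * (c - r)) by ring. assert (0 <= eps * (c - r)) by (apply Rmult_le_pos; lra). unfold gap in *. lra. }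
    pose proof (Hlub _ Hup). lra. }
  destruct (Req_dec c b) as [<-|Hne2]. exact HSc.
  exfalso. destruct (Hl c (conj Hac (ltac:(lra) : c < b)) eps He) as [d [Hd Hd']].
  set (t' := Rmin (c + d/2) b).
  assert (Ht1 : c < t'). { unfold t'. apply Rmin_glb_lt. lra. lra. }
  assert (Ht2 : t' < c + d). { unfold t'. pose proof (Rmin_l (c + d/2) b). lra. }
  assert (Ht3 : t' <= b) by apply Rmin_r.
  pose proof (Hd' t' (conj Ht1 Ht2) Ht3).
  assert (S t'). { split. lra. nra. }
  pose proof (Hub t' H0). lra. Qed.

Lemma sup_mono (G : R -> R) a b : a <= b ->
  (forall c, a <= c <= b -> cw (fun r => a <= r <= b) G c) ->
  (forall t, a <= t < b -> forall e, 0 < e -> exists del, 0 < del /\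
      forall t', t < t' < t + del -> t' <= b -> G t' <= G t + e * (t' - t)) ->
  G b <= G a.
Proof. intros Hab Hc Hl. destruct (Rle_dec (G b) (G a)) as [h|h]; auto. exfalso.
  set (e := (G b - G a) / (b - a + 1)).
  assert (He : 0 < e) by (unfold e; apply Rdiv_lt_0_compat; lra).
  pose proof (sup_mono_eps G a b e Hab He Hc Hl).
  assert (e * (b - a) < G b - G a).
  { unfold e. apply Rmult_lt_reg_r with (b - a + 1). lra.
    replace ((G b - G a) / (b - a + 1) * (b - a) * (b - a + 1)) with ((G b - G a) * (b - a)) by (field; lra).
    nra. }
  lra. Qed.


Lemma sq_diff l (a b : nat -> R) :
  sumL l (fun i => a i ^ 2) - sumL l (fun i => b i ^ 2) <= 2 * sumL l (fun i => a i * (a i - b i)).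
Proof. unfold sumL; induction l as [|i l IH]; simpl. lra.
  pose proof (pow2_ge_0 (a i - b i)).
  assert (2 * (a i * (a i - b i)) - (a i ^ 2 - b i ^ 2) = (a i - b i)^2) by ring.
  simpl in *. lra. Qed.

Lemma term_ineq K a Dv c z q : 0 < K -> 0 < q ->
  a * (Dv - c * q) <= K/2 * a^2 + /(2*K) * Dv^2 - q/2 * (a^2 + c^2) + q * ((a - z)^2 + (c - z)^2).
Proof. intros HK Hq.
  assert (H1 : a * Dv <= K/2 * a^2 + /(2*K) * Dv^2).
  { assert (0 <= (K*a - Dv)^2 / (2*K)). { apply Rdiv_le_0_compat. apply pow2_ge_0. lra. }
    assert ((K*a - Dv)^2 / (2*K) = K/2 * a^2 + /(2*K) * Dv^2 - a * Dv) by (field; lra). lra. }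
  assert (H2 : 0 <= q * ((a - z) + (c - z))^2) by (apply Rmult_le_pos; [lra|apply pow2_ge_0]).
  assert (q * ((a - z)^2 + (c - z)^2) - q/2 * (a^2 + c^2) + q * (a * c) = q * ((a - z) + (c - z))^2 / 2) by field.
  assert (a * (Dv - c * q) = a * Dv - q * (a * c)) by ring. lra. Qed.

Lemma sum_ineq K q l (a Dv c z : nat -> R) : 0 < K -> 0 < q ->
  sumL l (fun i => a i * (Dv i - c i * q)) <=
  K/2 * sumL l (fun i => a i ^ 2) + /(2*K) * sumL l (fun i => Dv i ^ 2)
  - q/2 * (sumL l (fun i => a i ^ 2) + sumL l (fun i => c i ^ 2))
  + q * (sumL l (fun i => (a i - z i) ^ 2) + sumL l (fun i => (c i - z i) ^ 2)).
Proof. intros HK Hq. unfold sumL; induction l as [|i l IH]; cbn [fold_right map]. lra.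
  pose proof (term_ineq K (a i) (Dv i) (c i) (z i) q HK Hq).
  eapply Rle_trans; [apply Rplus_le_compat; [exact H|exact IH]|]. right; ring. Qed.

Lemma B_bound K ut us wt ws is i0 u0 eta : 0 < eta <= 1 -> Rabs (ut - u0) < eta ->
  Rabs (us - u0) < eta -> 0 <= wt < eta -> 0 <= ws < eta -> Rabs (is - i0) < eta ->
  0 < i0 -> 0 <= u0 -> 0 < K -> 0 < is ->
  (K - is) * ((ut + us) / 2) + (wt + ws) * is <= (K - i0) * u0 + (K + u0 + 3 * i0 + 3) * eta.
Proof. intros He H1 H2 H3 H4 H5 Hi Hu HK Hip.
  apply Rabs_def2 in H1. apply Rabs_def2 in H2. apply Rabs_def2 in H5.
  set (m := (ut + us) / 2).
  assert (Hm : Rabs (m - u0) <= eta). { unfold m. apply Rabs_le. lra. }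
  assert (Hk : Rabs (K - is) <= K + i0 + 1). { apply Rabs_le. lra. }
  assert (A1 : (K - is) * (m - u0) <= (K + i0 + 1) * eta).
  { apply Rle_trans with (Rabs ((K - is) * (m - u0))). apply Rle_abs.
    rewrite Rabs_mult. apply Rmult_le_compat; auto using Rabs_pos. }
  assert (A2 : (i0 - is) * u0 <= eta * u0). { apply Rmult_le_compat_r; lra. }
  assert (A3 : (wt + ws) * is <= (2 * eta) * (i0 + 1)).
  { apply Rmult_le_compat; lra. }
  assert ((K - is) * m = (K - i0) * u0 + (K - is) * (m - u0) + (i0 - is) * u0) by ring.
  nra. Qed.

Lemma combine hh eps eta Ih h0 phi' p0 du P A C1 dphi q0 u0 :
  0 < hh -> 0 < eta <= 1 -> Ih <= hh * (h0 + eta) -> 0 < phi' -> Rabs (phi' - p0) < eta ->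
  du <= 2 * P -> P <= hh * (A + C1 * eta) -> dphi <= hh * (q0 + eta) -> 0 <= u0 ->
  h0 + 2 * p0 * A + q0 * u0 = 0 -> 0 <= C1 -> 0 < p0 ->
  eta * (1 + 2 * Rabs A + 2 * (p0 + 1) * C1 + u0 + 1) <= eps ->
  Ih + phi' * du + dphi * u0 <= eps * hh.
Proof. intros Hh He HI Hp Hpp Hdu HP Hd Hu Hid HC Hp0 Heps.
  assert (B1 : phi' * du <= 2 * phi' * P) by nra.
  assert (B2 : 2 * phi' * P <= 2 * phi' * (hh * (A + C1 * eta))) by nra.
  assert (B3 : dphi * u0 <= hh * (q0 + eta) * u0) by nra.
  apply Rabs_def2 in Hpp.
  assert (B4 : phi' * (A + C1 * eta) <= p0 * A + eta * Rabs A + (p0 + 1) * C1 * eta).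
  { assert ((phi' - p0) * A <= eta * Rabs A).
    { apply Rle_trans with (Rabs ((phi' - p0) * A)). apply Rle_abs.
      rewrite Rabs_mult. apply Rmult_le_compat_r. apply Rabs_pos. apply Rabs_le; lra. }
    assert (phi' * (C1 * eta) <= (p0 + 1) * C1 * eta).
    { assert (0 <= C1 * eta) by nra. nra. }
    nra. }
  assert (B5 : 2 * phi' * (hh * (A + C1 * eta)) = hh * (2 * (phi' * (A + C1 * eta)))) by ring.
  assert (B6 : hh * (2 * (phi' * (A + C1 * eta))) <= hh * (2 * (p0 * A + eta * Rabs A + (p0 + 1) * C1 * eta))) by nra.
  assert (B7 : hh * (h0 + eta) + hh * (2 * (p0 * A + eta * Rabs A + (p0 + 1) * C1 * eta)) + hh * (q0 + eta) * u0
     = hh * (eta * (1 + 2 * Rabs A + 2 * (p0 + 1) * C1 + u0)) + hh * (h0 + 2 * p0 * A + q0 * u0)) by ring.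
  rewrite Hid in B7.
  assert (hh * (eta * (1 + 2 * Rabs A + 2 * (p0 + 1) * C1 + u0)) <= hh * eps) by nra.
  nra. Qed.

Lemma sumL_zero l f : (forall i, f i = 0) -> sumL l f = 0.
Proof. intros H. unfold sumL; induction l as [|a l IH]; simpl. auto. rewrite H, IH; ring. Qed.

Section Z.
Variables (K T th : R).
Hypotheses (HK : 0 < K) (Hth : 0 < th < 2).

Lemma zeta_pos t : t < T -> 0 < zeta K T th t.
Proof. intros Ht. unfold zeta. apply Rmult_lt_0_compat.
  apply Rdiv_lt_0_compat; lra.
  assert (exp (2/3*K*(t-T)) < exp 0) by (apply exp_increasing; nra).
  rewrite exp_0 in H. lra. Qed.

Lemma zeta_cont t : continuity_pt (zeta K T th) t.
Proof. unfold zeta. apply continuity_pt_mult. apply continuity_pt_const. intros a b; auto.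
  apply continuity_pt_minus. apply continuity_pt_const. intros a b; auto.
  apply (continuity_pt_comp (fun t => 2/3*K*(t-T)) exp).
  apply continuity_pt_mult. apply continuity_pt_const. intros a b; auto.
  apply continuity_pt_minus. apply derivable_continuous_pt, derivable_pt_id.
  apply continuity_pt_const. intros a b; auto.
  apply derivable_continuous_pt, derivable_pt_exp. Qed.

Lemma phi_deriv t : t < T ->
  derivable_pt_lim (fun r => / (th * zeta K T th r ^ 3)) t
   ((2 - th) * exp (2/3*K*(t-T)) / (th * zeta K T th t ^ 4)).
Proof. intros Ht.
  assert (HE : exp (2/3*K*(t-T)) < 1).
  { rewrite <- exp_0. apply exp_increasing. nra. }
  apply is_derive_Reals. unfold zeta in *.
  auto_derive; replace (t + - T) with (t - T) by ring;
  set (E := exp (2 / 3 * K * (t - T))) in *.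
  - apply Rgt_not_eq. repeat apply Rmult_lt_0_compat; try lra; apply Rinv_0_lt_compat; lra.
  - field. repeat split; lra.
Qed.

Lemma key_id t u0 : t < T ->
  u0 / zeta K T th t ^ 4 + 2 * / (th * zeta K T th t ^ 3) * ((K - / zeta K T th t) * u0)
  + (2 - th) * exp (2/3*K*(t-T)) / (th * zeta K T th t ^ 4) * u0 = 0.
Proof. intros Ht.
  assert (HE : exp (2/3*K*(t-T)) < 1).
  { rewrite <- exp_0. apply exp_increasing. nra. }
  unfold zeta. set (E := exp (2 / 3 * K * (t - T))) in *.
  field. repeat split; lra. Qed.

End Z.

Lemma cw_sub (D D' : R -> Prop) f t : (forall r, D' r -> D r) -> cw D f t -> cw D' f t.
Proof. intros HS H. apply cw_mk. intros eta He. destruct (cw_get _ _ _ H eta He) as [a [Ha Hb]].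
  exists a; split; auto. Qed.

Lemma ext_cont (T : R) f t : 0 <= t < T -> cw (fun r => 0 <= r < T) f t ->
  continuity_pt (fun r => f (Rmax 0 r)) t.
Proof. intros Ht H eta He. destruct (cw_get _ _ _ H eta He) as [a [Ha Hb]].
  exists (Rmin a (T - t)). split. apply Rmin_glb_lt; lra.
  intros r [_ Hr]. simpl in *. unfold R_dist in *.
  rewrite (Rmax_right 0 t) by lra.
  assert (H1 : Rabs (r - t) < a) by (pose proof (Rmin_l a (T - t)); lra).
  assert (H2 : Rabs (r - t) < T - t) by (pose proof (Rmin_r a (T - t)); lra).
  apply Rabs_def2 in H2.
  destruct (Rle_dec 0 r).
  - rewrite Rmax_right by lra. apply Hb. lra. auto.
  - rewrite Rmax_left by lra. apply Hb. lra. rewrite Rabs_left1 by lra.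
    apply Rabs_def2 in H1. lra. Qed.

Section Core.
Variables (d : nat) (K T th : R) (Z D : R -> vec).
Hypotheses (HK : 0 < K) (Hth : 0 < th < 2).
Let DT := fun r => 0 <= r < T.
Let zt r := zeta K T th r.
Let g i s := D s i - Z s i / zt s.
Let u r := sumL (seq 0 d) (fun i => Z r i ^ 2).
Hypothesis HD : forall s, DT s -> sumL (seq 0 d) (fun i => D s i ^ 2) <= K ^ 2 * u s.
Hypothesis HZ : forall t, DT t -> forall i, (i < d)%nat ->
  ex_RInt (g i) 0 t /\ Z t i = Z 0 i + RInt (g i) 0 t.

Lemma Zcont t i : DT t -> (i < d)%nat -> cw DT (fun r => Z r i) t.
Proof. intros Ht Hi. unfold DT in Ht. set (t1 := (t + T) / 2).
  destruct (HZ t1 ltac:(unfold DT, t1; lra) i Hi) as [Hex _].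
  destruct (prim_lip (g i) 0 t1 Hex ltac:(unfold t1; lra)) as [M [HM HMl]].
  apply cw_mk. intros eta He. exists (Rmin (t1 - t) (eta / M)). split.
  apply Rmin_glb_lt. unfold t1; lra. apply Rdiv_lt_0_compat; lra.
  intros r Hr Hrt. pose proof (Rmin_l (t1 - t) (eta / M)). pose proof (Rmin_r (t1 - t) (eta / M)).
  assert (Hr1 : r <= t1). { apply Rabs_def2 in Hrt. lra. }
  destruct (HZ r Hr i Hi) as [_ E1]. destruct (HZ t (conj (proj1 Ht) (proj2 Ht)) i Hi) as [_ E2].
  rewrite E1, E2. replace (Z 0 i + RInt (g i) 0 r - (Z 0 i + RInt (g i) 0 t)) with
    (RInt (g i) 0 r - RInt (g i) 0 t) by ring.
  eapply Rle_lt_trans. apply HMl. unfold DT in Hr; lra. unfold t1; lra.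
  apply Rlt_le_trans with (M * (eta / M)). apply Rmult_lt_compat_l; lra.
  right. field. lra. Qed.

Lemma in_seq0 i : In i (seq 0 d) -> (i < d)%nat.
Proof. intros H. apply in_seq in H. lia. Qed.

Lemma u_cont t : DT t -> cw DT u t.
Proof. intros Ht. apply (cw_sumL DT (seq 0 d) (fun i r => Z r i ^ 2)).
  intros i Hi. apply (cw_ext DT (fun r => Z r i * Z r i)). intros; ring.
  apply cw_mult; apply Zcont; auto; apply in_seq0; auto. Qed.

Lemma w_cont t : DT t -> cw DT (fun r => sumL (seq 0 d) (fun i => (Z r i - Z t i) ^ 2)) t.
Proof. intros Ht. apply (cw_sumL DT (seq 0 d) (fun i r => (Z r i - Z t i) ^ 2)).
  intros i Hi. apply (cw_ext DT (fun r => (Z r i - Z t i) * (Z r i - Z t i))). intros; ring.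
  apply cw_mult; apply cw_minus; try apply cw_const; apply Zcont; auto; apply in_seq0; auto. Qed.

Lemma zt_pos t : DT t -> 0 < zt t.
Proof. intros [_ H]. apply zeta_pos; auto. Qed.

Lemma zt_cont t : cw DT zt t.
Proof. apply cw_pt. apply zeta_cont. Qed.

Lemma iota_cont t : DT t -> cw DT (fun r => / zt r) t.
Proof. intros Ht. apply (cw_inv DT zt t). apply zt_cont. apply Rgt_not_eq, zt_pos; auto. Qed.

Lemma phi_cont t : DT t -> cw DT (fun r => / (th * zt r ^ 3)) t.
Proof. intros Ht. apply cw_inv.
  apply (cw_ext DT (fun r => th * (zt r * (zt r * zt r)))). intros; ring.
  apply (cw_mult DT (fun _ => th)); [apply cw_const|].
  apply (cw_mult DT zt); [apply zt_cont|]. apply (cw_mult DT zt); apply zt_cont.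
  apply Rgt_not_eq. pose proof (zt_pos t Ht). apply Rmult_lt_0_compat. lra. apply pow_lt; auto. Qed.

Let h r := u r / zt r ^ 4.

Lemma h_cont t : DT t -> cw DT h t.
Proof. intros Ht. unfold h. apply (cw_ext DT (fun r => u r * / (zt r * (zt r * (zt r * zt r))))).
  intros; unfold Rdiv; simpl; f_equal; f_equal; ring.
  apply cw_mult. apply u_cont; auto. apply cw_inv.
  apply (cw_mult DT zt); [apply zt_cont|]. apply (cw_mult DT zt); [apply zt_cont|].
  apply (cw_mult DT zt); apply zt_cont.
  apply Rgt_not_eq. pose proof (zt_pos t Ht).
  replace (zt t * (zt t * (zt t * zt t))) with (zt t ^ 4) by ring. apply pow_lt; auto. Qed.

Lemma h_int s0 : 0 <= s0 < T -> ex_RInt h 0 s0.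
Proof. intros Hs. apply (ex_RInt_ext (fun r => h (Rmax 0 r))).
  intros x. rewrite Rmin_left, Rmax_right by lra. intros Hx. rewrite Rmax_right by lra; auto.
  apply (ex_RInt_continuous (V:=R_CompleteNormedModule)). rewrite Rmin_left, Rmax_right by lra. intros z Hz.
  apply continuity_pt_filterlim. apply (ext_cont T). lra. apply h_cont. unfold DT; lra. Qed.


Let F r := RInt h 0 r + / (th * zt r ^ 3) * u r.

Lemma u_ge0 r : 0 <= u r.
Proof. apply sumL_ge0. intros; apply pow2_ge_0. Qed.

Lemma local s0 t eps : 0 <= s0 < T -> 0 <= t < s0 -> 0 < eps -> exists del, 0 < del /\
  forall t', t < t' < t + del -> t' <= s0 -> F t' <= F t + eps * (t' - t).
Proof. intros Hs0 Hts He.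
  assert (Ht : DT t) by (unfold DT; lra).
  pose proof (zt_pos t Ht) as Hz0.
  set (z0 := zt t) in *. set (i0 := / z0). set (u0 := u t).
  set (p0 := / (th * z0 ^ 3)). set (q0 := (2 - th) * exp (2/3*K*(t-T)) / (th * z0 ^ 4)).
  set (h0 := h t). set (A := (K - i0) * u0). set (C1 := K + u0 + 3 * i0 + 3).
  set (C2 := 1 + 2 * Rabs A + 2 * (p0 + 1) * C1 + u0 + 1).
  assert (Hu0 : 0 <= u0) by apply u_ge0.
  assert (Hi0 : 0 < i0) by (apply Rinv_0_lt_compat; auto).
  assert (Hp0 : 0 < p0) by (apply Rinv_0_lt_compat; apply Rmult_lt_0_compat; [lra|apply pow_lt; auto]).
  assert (HC1 : 0 <= C1) by (unfold C1; lra).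
  assert (HC2 : 0 < C2) by (unfold C2; pose proof (Rabs_pos A); nra).
  set (eta := Rmin 1 (eps / C2)).
  assert (Heta : 0 < eta <= 1). { split. apply Rmin_glb_lt. lra. apply Rdiv_lt_0_compat; lra. apply Rmin_l. }
  assert (HetaC : eta * C2 <= eps).
  { apply Rle_trans with (eps / C2 * C2). apply Rmult_le_compat_r. lra. apply Rmin_r. right; field; lra. }
  assert (Hid : h0 + 2 * p0 * A + q0 * u0 = 0).
  { unfold h0, h, p0, A, q0, i0, z0, zt. apply key_id; auto; lra. }
  destruct (cw_get _ _ _ (h_cont t Ht) eta (proj1 Heta)) as [d1 [Hd1 Hd1']].
  destruct (cw_get _ _ _ (u_cont t Ht) eta (proj1 Heta)) as [d2 [Hd2 Hd2']].
  destruct (cw_get _ _ _ (w_cont t Ht) eta (proj1 Heta)) as [d3 [Hd3 Hd3']].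
  destruct (cw_get _ _ _ (iota_cont t Ht) eta (proj1 Heta)) as [d4 [Hd4 Hd4']].
  destruct (cw_get _ _ _ (phi_cont t Ht) eta (proj1 Heta)) as [d5 [Hd5 Hd5']].
  destruct (phi_deriv K T th HK Hth t ltac:(lra) eta (proj1 Heta)) as [d6 Hd6].
  set (del := Rmin (Rmin (Rmin d1 d2) (Rmin d3 d4)) (Rmin d5 d6)).
  assert (Hdel : 0 < del).
  { unfold del. repeat apply Rmin_glb_lt; auto. apply cond_pos. }
  exists del. split; auto. intros t' [Ht1 Ht2] Ht3.
  assert (Hdl : del <= d1 /\ del <= d2 /\ del <= d3 /\ del <= d4 /\ del <= d5 /\ del <= d6).
  { unfold del. pose proof (Rmin_l (Rmin (Rmin d1 d2) (Rmin d3 d4)) (Rmin d5 d6)).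
    pose proof (Rmin_r (Rmin (Rmin d1 d2) (Rmin d3 d4)) (Rmin d5 d6)).
    pose proof (Rmin_l (Rmin d1 d2) (Rmin d3 d4)). pose proof (Rmin_r (Rmin d1 d2) (Rmin d3 d4)).
    pose proof (Rmin_l d1 d2). pose proof (Rmin_r d1 d2). pose proof (Rmin_l d3 d4).
    pose proof (Rmin_r d3 d4). pose proof (Rmin_l d5 d6). pose proof (Rmin_r d5 d6).
    repeat split; lra. }
  destruct Hdl as [L1 [L2 [L3 [L4 [L5 L6]]]]].
  set (w := fun r => sumL (seq 0 d) (fun i => (Z r i - Z t i) ^ 2)).
  assert (Pt : forall r, t <= r <= t' -> DT r /\ Rabs (r - t) < del).
  { intros r Hr. split. unfold DT; lra. rewrite Rabs_right by lra. lra. }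
  assert (Fh : forall r, t <= r <= t' -> Rabs (h r - h0) < eta).
  { intros r Hr. destruct (Pt r Hr). apply Hd1'; auto; lra. }
  assert (Fu : forall r, t <= r <= t' -> Rabs (u r - u0) < eta).
  { intros r Hr. destruct (Pt r Hr). apply Hd2'; auto; lra. }
  assert (Fw : forall r, t <= r <= t' -> 0 <= w r < eta).
  { intros r Hr. destruct (Pt r Hr). split. apply sumL_ge0; intros; apply pow2_ge_0.
    pose proof (Hd3' r H ltac:(lra)) as Hx.
    rewrite (sumL_zero _ (fun i => (Z t i - Z t i) ^ 2)) in Hx by (intros; ring).
    rewrite Rminus_0_r in Hx. fold (w r) in Hx. pose proof (Rle_abs (w r)). lra. }
  assert (Fi : forall r, t <= r <= t' -> Rabs (/ zt r - i0) < eta).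
  { intros r Hr. destruct (Pt r Hr). apply Hd4'; auto; lra. }
  assert (Fp : forall r, t <= r <= t' -> Rabs (/ (th * zt r ^ 3) - p0) < eta).
  { intros r Hr. destruct (Pt r Hr). apply Hd5'; auto; lra. }
  set (hh := t' - t).
  assert (Hhh : 0 < hh) by (unfold hh; lra).
  assert (Hexh : ex_RInt h t t') by (apply (ex_sub h 0 s0); [apply h_int; auto|lra|lra]).
  assert (S1 : RInt h t t' <= hh * (h0 + eta)).
  { apply Rle_trans with (RInt (fun _ => h0 + eta) t t').
    apply RInt_le. lra. auto. apply ex_RInt_const.
    intros x Hx. pose proof (Fh x ltac:(lra)) as Hx2. apply Rabs_def2 in Hx2. lra.
    rewrite RInt_const. right. reflexivity. }
  assert (S2 : / (th * zt t' ^ 3) - p0 <= hh * (q0 + eta)).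
  { assert (hh <> 0) by lra. pose proof (Hd6 hh H ltac:(unfold hh; rewrite Rabs_right by lra; lra)) as Hx.
    replace (t + hh) with t' in Hx by (unfold hh; ring).
    apply Rabs_def2 in Hx. destruct Hx as [Hx _].
    change (zeta K T th t') with (zt t') in Hx. change (zeta K T th t) with z0 in Hx.
    change (/ (th * z0 ^ 3)) with p0 in Hx. change ((2 - th) * exp (2 / 3 * K * (t - T)) / (th * z0 ^ 4)) with q0 in Hx.
    assert ((/ (th * zt t' ^ 3) - p0) / hh < q0 + eta) by lra.
    apply Rmult_lt_compat_l with (r := hh) in H0; auto.
    replace (hh * ((/ (th * zt t' ^ 3) - p0) / hh)) with (/ (th * zt t' ^ 3) - p0) in H0 by (field; split; [apply Rgt_not_eq, zt_pos; unfold DT; lra | split; [lra | exact H]]).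
    lra. }
  set (P := sumL (seq 0 d) (fun i => Z t' i * (Z t' i - Z t i))).
  assert (S3 : u t' - u0 <= 2 * P) by exact (sq_diff (seq 0 d) (fun i => Z t' i) (fun i => Z t i)).
  assert (Dt' : DT t') by (unfold DT; lra).
  assert (S4 : forall i, In i (seq 0 d) -> ex_RInt (g i) t t' /\ Z t' i - Z t i = RInt (g i) t t').
  { intros i Hi. apply in_seq0 in Hi.
    destruct (HZ t' Dt' i Hi) as [ex0 E1]. destruct (HZ t Ht i Hi) as [_ E2].
    split. apply (ex_sub (g i) 0 t'); auto; lra.
    rewrite E1, E2. rewrite <- (RInt_diff (g i) 0 t' t' t); auto; try lra. }
  set (Sg := fun s => sumL (seq 0 d) (fun i => Z t' i * g i s)).
  assert (S5 : ex_RInt Sg t t' /\ RInt Sg t t' = P).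
  { destruct (RInt_sumL (seq 0 d) (fun i s => Z t' i * g i s) t t') as [X1 X2].
    intros i Hi. apply (ex_RInt_scal (V:=R_NormedModule) (g i)). apply S4; auto.
    split. exact X1. unfold Sg. rewrite X2. unfold P. apply sumL_ext. intros i Hi.
    destruct (S4 i Hi) as [X3 X4]. rewrite X4.
    exact (RInt_scal (V:=R_CompleteNormedModule) (g i) t t' (Z t' i) X3). }
  destruct S5 as [S5a S5b].
  assert (S6 : P <= hh * (A + C1 * eta)).
  { rewrite <- S5b. apply Rle_trans with (RInt (fun _ => A + C1 * eta) t t').
    apply RInt_le. lra. auto. apply ex_RInt_const.
    2: { rewrite RInt_const. right. reflexivity. }
    intros x Hx.
    assert (Dx : DT x) by (unfold DT; lra).
    assert (Hq : 0 < / zt x) by (apply Rinv_0_lt_compat, zt_pos; auto).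
    pose proof (sum_ineq K (/ zt x) (seq 0 d) (fun i => Z t' i) (fun i => D x i) (fun i => Z x i) (fun i => Z t i) HK Hq) as Hs.
    cbv beta in Hs.
    change (sumL (seq 0 d) (fun i => Z t' i ^ 2)) with (u t') in Hs.
    change (sumL (seq 0 d) (fun i => Z x i ^ 2)) with (u x) in Hs.
    change (sumL (seq 0 d) (fun i => (Z t' i - Z t i) ^ 2)) with (w t') in Hs.
    change (sumL (seq 0 d) (fun i => (Z x i - Z t i) ^ 2)) with (w x) in Hs.
    change (Sg x) with (sumL (seq 0 d) (fun i => Z t' i * (D x i - Z x i * / zt x))).
    assert (HD2 : / (2 * K) * sumL (seq 0 d) (fun i => D x i ^ 2) <= K / 2 * u x).
    { apply Rle_trans with (/ (2 * K) * (K ^ 2 * u x)). apply Rmult_le_compat_l.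
      apply Rlt_le, Rinv_0_lt_compat; lra. apply HD; auto. right; field; lra. }
    pose proof (B_bound K (u t') (u x) (w t') (w x) (/ zt x) i0 u0 eta Heta
      (Fu t' ltac:(lra)) (Fu x ltac:(lra)) (Fw t' ltac:(lra)) (Fw x ltac:(lra)) (Fi x ltac:(lra))
      Hi0 Hu0 HK Hq) as Hb.
    assert (K / 2 * u t' + K / 2 * u x - / zt x / 2 * (u t' + u x) + / zt x * (w t' + w x)
      = (K - / zt x) * ((u t' + u x) / 2) + (w t' + w x) * / zt x) by (field; apply Rgt_not_eq, zt_pos; auto).
    unfold A, C1. lra. }
  pose proof (Fp t' ltac:(lra)) as Hp'.
  assert (Hphi' : 0 < / (th * zt t' ^ 3)).
  { apply Rinv_0_lt_compat, Rmult_lt_0_compat. lra. apply pow_lt, zt_pos; auto. }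
  pose proof (combine hh eps eta (RInt h t t') h0 (/ (th * zt t' ^ 3)) p0 (u t' - u0) P A C1
    (/ (th * zt t' ^ 3) - p0) q0 u0 Hhh Heta S1 Hphi' Hp' S3 S6 S2 Hu0 Hid HC1 Hp0
    ltac:(unfold C2 in HetaC; lra)) as Hc.
  assert (E : F t' - F t = RInt h t t' + / (th * zt t' ^ 3) * (u t' - u0) + (/ (th * zt t' ^ 3) - p0) * u0).
  { unfold F. rewrite <- (RInt_diff h 0 s0 t' t). unfold p0, u0, z0. ring.
    apply h_int; auto. lra. lra. }
  lra.
Qed.


Lemma core s0 : 0 <= s0 < T -> ex_RInt h 0 s0 /\
  RInt h 0 s0 + u s0 / (th * zt s0 ^ 3) <= u 0 / (th * zt 0 ^ 3).
Proof. intros Hs. split. apply h_int; auto.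
  assert (HF : F s0 <= F 0).
  { apply sup_mono. lra.
    - intros c Hc. unfold F. apply cw_plus.
      + destruct (prim_lip h 0 s0 (h_int s0 Hs) ltac:(lra)) as [M [HM HMl]].
        apply cw_mk. intros eta He. exists (eta / M). split. apply Rdiv_lt_0_compat; lra.
        intros r Hr Hrc. eapply Rle_lt_trans. apply HMl; lra.
        apply Rlt_le_trans with (M * (eta / M)). apply Rmult_lt_compat_l; lra. right; field; lra.
      + apply cw_mult; apply (cw_sub DT). 1,3: intros r Hr; unfold DT; lra.
        apply phi_cont; unfold DT; lra. apply u_cont; unfold DT; lra.
    - intros t Ht e He. apply local; auto. }
  unfold F in HF. rewrite RInt_point in HF. change (@zero R_CompleteNormedModule) with 0 in HF.
  unfold Rdiv. lra. Qed.

End Core.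

Lemma RI_point (f : R -> R) (pr : Riemann_integrable f 0 0) : RiemannInt pr = 0.
Proof. rewrite <- RInt_Reals. rewrite RInt_point. reflexivity. Qed.

Lemma main_aux d K T th (X Y : R -> vec) (b : R -> vec -> vec) (N : R -> vec) (x y : vec) s0 :
  0 < K -> 0 < th < 2 -> 0 <= s0 < T ->
  (forall t, 0 <= t < T -> sqnorm d (vsub (b t (X t)) (b t (Y t))) <= K ^ 2 * sqnorm d (vsub (X t) (Y t))) ->
  (forall i, N 0 i = 0) ->
  (forall t, 0 <= t <= T -> forall i, (i < d)%nat ->
     exists pr : Riemann_integrable (fun s => b s (X s) i) 0 t,
       X t i = x i + RiemannInt pr + N t i) ->
  (forall t, 0 <= t < T -> forall i, (i < d)%nat ->
     exists pr : Riemann_integrable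
                   (fun s => b s (Y s) i + (X s i - Y s i) / zeta K T th s) 0 t,
       Y t i = y i + RiemannInt pr + N t i) ->
  exists pr : Riemann_integrable
                (fun t => sqnorm d (vsub (X t) (Y t)) / (zeta K T th t) ^ 4) 0 s0,
    RiemannInt pr
    + sqnorm d (vsub (X s0) (Y s0)) / (th * (zeta K T th s0) ^ 3)
    <= sqnorm d (vsub x y) / (th * (zeta K T th 0) ^ 3).
Proof. intros HK Hth Hs HB HN HX HY.
  set (Z := fun t => vsub (X t) (Y t)). set (D := fun s => vsub (b s (X s)) (b s (Y s))).
  assert (HX0 : forall i, (i < d)%nat -> X 0 i = x i).
  { intros i Hi. destruct (HX 0 ltac:(lra) i Hi) as [pr E]. rewrite E, RI_point, HN. ring. }
  assert (HY0 : forall i, (i < d)%nat -> Y 0 i = y i).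
  { intros i Hi. destruct (HY 0 ltac:(lra) i Hi) as [pr E]. rewrite E, RI_point, HN. ring. }
  destruct (core d K T th Z D HK Hth) with (s0 := s0) as [Hex Hle]; auto.
  - intros t Ht i Hi.
    destruct (HX t ltac:(lra) i Hi) as [pr1 E1]. destruct (HY t Ht i Hi) as [pr2 E2].
    pose proof (ex_RInt_Reals_1 _ _ _ pr1) as X1. pose proof (ex_RInt_Reals_1 _ _ _ pr2) as X2.
    assert (Eg : forall s, D s i - Z s i / zeta K T th s =
       (b s (X s) i) - (b s (Y s) i + (X s i - Y s i) / zeta K T th s)).
    { intros s. unfold D, Z, vsub. ring. }
    assert (Hexg : ex_RInt (fun s => D s i - Z s i / zeta K T th s) 0 t).
    { apply (ex_RInt_ext (fun s => minus (b s (X s) i) (b s (Y s) i + (X s i - Y s i) / zeta K T th s))).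
      intros s _. rewrite Eg. reflexivity.
      apply (ex_RInt_minus (V:=R_NormedModule)); auto. }
    split. exact Hexg.
    rewrite (RInt_ext _ (fun s => minus (b s (X s) i) (b s (Y s) i + (X s i - Y s i) / zeta K T th s))).
    2: { intros s _. rewrite Eg. reflexivity. }
    rewrite (RInt_minus (V:=R_CompleteNormedModule)) by auto.
    rewrite (RInt_Reals _ _ _ pr1), (RInt_Reals _ _ _ pr2).
    unfold Z, vsub. rewrite E1, E2, HX0, HY0 by auto.
    change (minus (RiemannInt pr1) (RiemannInt pr2)) with (RiemannInt pr1 - RiemannInt pr2). ring.
  - exists (ex_RInt_Reals_0 _ _ _ Hex). rewrite <- RInt_Reals.
    replace (sqnorm d (vsub x y)) with (sumL (seq 0 d) (fun i => Z 0 i ^ 2)).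
    exact Hle.
    apply sumL_ext. intros i Hi. apply in_seq in Hi. unfold Z, vsub. rewrite HX0, HY0 by lia. reflexivity.
Qed.

End Aux.

Lemma sqnorm_ge0 d v : 0 <= sqnorm d v.
Proof. apply (Aux.sumL_ge0 (seq 0 d) (fun i => v i ^ 2)). intros; apply pow2_ge_0. Qed.

Lemma norm_sq d v w K : 0 < K -> norm d v <= K * norm d w -> sqnorm d v <= K ^ 2 * sqnorm d w.
Proof. unfold norm. intros HK H. pose proof (sqnorm_ge0 d v). pose proof (sqnorm_ge0 d w).
  rewrite <- (sqrt_sqrt (sqnorm d v)), <- (sqrt_sqrt (sqnorm d w)) by auto.
  pose proof (sqrt_pos (sqnorm d v)).
  replace (K ^ 2 * (sqrt (sqnorm d w) * sqrt (sqnorm d w))) with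
    ((K * sqrt (sqnorm d w)) * (K * sqrt (sqnorm d w))) by ring.
  apply Rmult_le_compat; auto. Qed.

Theorem mainTheorem3
  (d : nat) (T H K Kbar alpha0 theta0 : R)
  (b : R -> vec -> vec) (sigma sigmainv : R -> mat)
  (N : R -> vec) (x y : vec) (X Y : R -> vec) :
  0 < T -> 1 / 2 < H < 1 ->
  (* (H1)(i) *)
  0 < K ->
  (forall t u v, 0 <= t <= T ->
     norm d (vsub (b t u) (b t v)) <= K * norm d (vsub u v)) ->
  (forall u, exists L, forall t s, 0 <= t <= T -> 0 <= s <= T ->
     norm d (vsub (b t u) (b s u)) <= L * Rabs (t - s)) ->
  (* (H1)(ii) *)
  (exists M, forall t i j, 0 <= t <= T -> (i < d)%nat -> (j < d)%nat ->
     Rabs (sigma t i j) <= M) ->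
  (forall t, 0 <= t <= T -> is_inverse d (sigma t) (sigmainv t)) ->
  0 <= Kbar -> H - 1 / 2 < alpha0 <= 1 ->
  (forall t s, 0 <= t <= T -> 0 <= s <= T ->
     frob d (msub (sigmainv t) (sigmainv s)) <= Kbar * Rpower (Rabs (t - s)) alpha0) ->
  0 < theta0 < 2 ->
  (* N t plays the role of the (pathwise) noise term int_0^t sigma(s) dB^H_s *)
  (forall i, N 0 i = 0) ->
  (* X solves dX = b(t,X) dt + sigma dB^H, X_0 = x, on [0,T] *)
  (forall t, 0 <= t <= T -> forall i, (i < d)%nat ->
     exists pr : Riemann_integrable (fun s => b s (X s) i) 0 t,
       X t i = x i + RiemannInt pr + N t i) ->
  (* Y solves dY = b(t,Y) dt + sigma dB^H + (X-Y)/zeta dt, Y_0 = y, on [0,T) *)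
  (forall t, 0 <= t < T -> forall i, (i < d)%nat ->
     exists pr : Riemann_integrable
                   (fun s => b s (Y s) i + (X s i - Y s i) / zeta K T theta0 s) 0 t,
       Y t i = y i + RiemannInt pr + N t i) ->
  forall s0, 0 <= s0 < T ->
  exists pr : Riemann_integrable
                (fun t => sqnorm d (vsub (X t) (Y t)) / (zeta K T theta0 t) ^ 4) 0 s0,
    RiemannInt pr
    + sqnorm d (vsub (X s0) (Y s0)) / (theta0 * (zeta K T theta0 s0) ^ 3)
    <= sqnorm d (vsub x y) / (theta0 * (zeta K T theta0 0) ^ 3).

Proof.
  intros HT HH HK Hb _ _ _ _ _ _ Hth HN HX HY s0 Hs0.
  apply (Aux.main_aux d K T theta0 X Y b N x y s0 HK Hth Hs0); auto.
  intros t Ht. apply norm_sq; auto. apply Hb. lra.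
Qed.
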